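(* For all integers $1\le k\le n$, $\hat E_{k,n}(-1)=\pm\binom{n-1}{k-1}$.
   Context: Place $1,\dots,n$ clockwise on a circle. Distinct $p_1,\dots,p_m$ are in clockwise cyclic order if $(p_2-p_1)\bmod n<\dots<(p_m-p_1)\bmod n$ (residues in $\{0,\dots,n-1\}$). For $\pi\in S_n$ (fixed points regarded as ''counterclockwise loops''), an ordered pair $(i,j)$, $i\ne j$, is aligned if $\pi(j)\ne j$, the entries of $(i,\pi(i),\pi(j),j)$ are pairwise distinct except that possibly $i=\pi(i)$, and the distinct entries in this order are in clockwise cyclic order. An alignment is an unordered pair $\{i,j\}$ with $(i,j)$ or $(j,i)$ aligned; $\mathrm{al}(\pi)$ is their number. A weak excedence of $\pi$ is an $i$ with $\pi(i)\ge i$. $E_{k,n}(q)=\sum q^{k(n-k)-\mathrm{al}(\pi)}$ over $\pi\in S_n$ with exactly $k$ weak excedences, and $\hat E_{k,n}(q)=q^{k-n}E_{k,n}(q)$. *)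

(* Defs.v *)
(* Points 1..n of the circle are encoded as 0..n-1 : 'I_n
   (shifting every label by 1 changes neither the cyclic order nor weak
   excedences). *)
From mathcomp Require Import all_boot all_order fingroup perm all_algebra.
Set Implicit Arguments. Unset Strict Implicit. Unset Printing Implicit Defensive.
Import GRing.Theory Num.Theory.

Section Alignments.
Variable n : nat.

Definition cyclic_cw (s : seq 'I_n) : bool :=
  match s with
  | [::] => true
  | p1 :: r => sorted ltn [seq (nat_of_ord p + n - p1) %% n | p <- r]
  end.

Definition aligned (pi : 'S_n) (i j : 'I_n) : bool :=
  [&& i != j, pi j != j &
      if pi i == i then uniq [:: i; pi j; j] && cyclic_cw [:: i; pi j; j]
      else uniq [:: i; pi i; pi j; j] && cyclic_cw [:: i; pi i; pi j; j]].

Definition al (pi : 'S_n) : nat :=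
  #|[set p : 'I_n * 'I_n | (p.1 < p.2)%N && (aligned pi p.1 p.2 || aligned pi p.2 p.1)]|.

Definition wex (pi : 'S_n) : nat := #|[set i : 'I_n | (i <= pi i)%N]|.

Local Open Scope ring_scope.

(* E_{k,n}(q) evaluated at an invertible q (integer exponents) *)
Definition E_eval (R : unitRingType) (q : R) (k : nat) : R :=
  \sum_(pi : 'S_n | wex pi == k) q ^ ((k * (n - k))%:Z - (al pi)%:Z).

Definition Ehat_eval (R : unitRingType) (q : R) (k : nat) : R :=
  q ^ (k%:Z - n%:Z) * E_eval q k.

End Alignments.

(* Main.v *)
Require Import Defs.
From mathcomp Require Import all_boot all_order fingroup perm all_algebra zify.
Set Implicit Arguments. Unset Strict Implicit. Unset Printing Implicit Defensive.
Import Order.TTheory GRing.Theory Num.Theory.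

Definition Dn (n p q : nat) := if p <= q then q - p else q + n - p.

Definition alN n (i j x y : nat) : bool :=
  [&& i != j, y != j &
    if x == i then [&& i != y, y != j & Dn n i y < Dn n i j]
    else [&& [&& i != x, i != y, i != j, x != y, x != j & y != j] , Dn n i x < Dn n i y & Dn n i y < Dn n i j]].

Ltac bash :=
  repeat (first
    [ lia
    | match goal with
      | |- context [?a == ?b :> nat] => case: (eqVneq a b) => ?
      | |- context [?a <= ?b] => case: (leqP a b) => ?
      | H : context [if ?a <= ?b then _ else _] |- _ => move: H; case: (leqP a b) => ? H
      end ]); try done.

Lemma pairN n i j x y : i < j -> j < n -> x < n -> y < n -> x != y ->
  (alN n i j x y || alN n j i y x) = (y < x) (+) (i <= x) (+) (j <= y).
Proof.
move=> ij jn xn yn xy.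
rewrite /alN /Dn.
bash.
Qed.
Lemma DnE n p q : p < n -> q < n -> (q + n - p) %% n = Dn n p q.
Proof.
move=> pn qn; rewrite /Dn; case: leqP => h.
  by rewrite -addnBAC // modnDr modn_small //; lia.
by rewrite modn_small //; lia.
Qed.

Lemma alignedE n (pi : 'S_n) (i j : 'I_n) : aligned pi i j = alN n i j (pi i) (pi j).
Proof.
rewrite /aligned /alN /cyclic_cw /= !inE !DnE //.
rewrite !val_eqE.
have E : forall a b : 'I_n, (nat_of_ord a == nat_of_ord b) = (a == b) by [].
rewrite !andbT.
case: (pi i == i); case: (i == j); case: (i == pi j); case: (i == pi i); case: (pi j == j); case: (pi i == pi j); by case: (pi i == j).
Qed.
Local Open Scope ring_scope.
Section Inv.
Variable n : nat.
Implicit Type s : 'S_n.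

Definition fsort s (p : 'I_n * 'I_n) : 'I_n * 'I_n :=
  if (p.1 < p.2)%N then (if (s p.1 < s p.2)%N then (s p.1, s p.2) else (s p.2, s p.1)) else p.

Lemma fsort_lt s p : ((fsort s p).1 < (fsort s p).2)%N = (p.1 < p.2)%N.
Proof.
rewrite /fsort; case: ifP => // h; case: ifP => //= h2.
rewrite ltn_neqAle leqNgt h2 andbT.
apply/negP => /eqP /val_inj /perm_inj E; by move: h; rewrite E ltnn.
Qed.

Lemma fsortK s : {in [pred p : 'I_n * 'I_n | (p.1 < p.2)%N], cancel (fsort s) (fsort s^-1)}.
Proof.
move=> [x y]; rewrite inE /= => xy.
rewrite /fsort /= xy.
case h: (s x < s y)%N => /=.
  by rewrite h !permK xy.
have h' : (s y < s x)%N.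
  rewrite ltn_neqAle leqNgt h andbT.
  apply/negP => /eqP /val_inj /perm_inj E; by move: xy; rewrite E ltnn.
by rewrite h' !permK ltnNge (ltnW xy).
Qed.

Lemma prod_sym s (F : 'I_n * 'I_n -> rat) :
  (forall x y, F (x, y) = F (y, x)) ->
  \prod_(p : 'I_n * 'I_n | (p.1 < p.2)%N) F (s p.1, s p.2) = \prod_(p : 'I_n * 'I_n | (p.1 < p.2)%N) F p.
Proof.
move=> Fsym.
rewrite [RHS](reindex (fsort s)) /=.
  apply: eq_big => p; first by rewrite fsort_lt.
  move=> h; rewrite /fsort h; case: ifP => _ //; by rewrite Fsym.
exists (fsort s^-1).
  move=> p; rewrite inE fsort_lt => h; apply: fsortK; by rewrite inE.
move=> p; rewrite inE => h.
have := fsortK (s^-1) (x:=p); rewrite invgK; apply; by rewrite inE.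
Qed.

Lemma inv_sign s :
  \prod_(p : 'I_n * 'I_n | (p.1 < p.2)%N) (-1 : rat) ^+ (s p.2 < s p.1)%N = (-1) ^+ s.
Proof.
pose a : 'rV[rat]_n := \row_j (j : nat)%:R.
have hV : \det (Vandermonde n (\row_j a 0 (s j))) = (-1) ^+ s * \det (Vandermonde n a).
  have -> : Vandermonde n (\row_j a 0 (s j)) = col_perm s (Vandermonde n a).
    by apply/matrixP => i j; rewrite !mxE.
  by rewrite col_permE det_mulmx det_perm odd_permV mulrC.
rewrite !det_Vandermonde in hV.
rewrite !(pair_big_dep xpredT (fun i j : 'I_n => (i < j)%N)) /= in hV.
have X : \prod_(p : 'I_n * 'I_n | (p.1 < p.2)%N) (a 0 p.2 - a 0 p.1) =
         \prod_(p : 'I_n * 'I_n | (p.1 < p.2)%N) `|(p.2 : nat)%:R - (p.1 : nat)%:R : rat|.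
  apply: eq_bigr => p h; rewrite !mxE ger0_norm // subr_ge0 ler_nat; exact: ltnW.
have Y : \prod_(p : 'I_n * 'I_n | (p.1 < p.2)%N) ((\row_j a 0 (s j)) 0 p.2 - (\row_j a 0 (s j)) 0 p.1) =
   \prod_(p : 'I_n * 'I_n | (p.1 < p.2)%N) (-1 : rat) ^+ (s p.2 < s p.1)%N *
   \prod_(p : 'I_n * 'I_n | (p.1 < p.2)%N) `|(p.2 : nat)%:R - (p.1 : nat)%:R : rat|.
  rewrite -(prod_sym s (F := fun p => `|(p.2 : nat)%:R - (p.1 : nat)%:R : rat|)); last first.
    by move=> x y /=; rewrite distrC.
  rewrite -big_split /=; apply: eq_bigr => p h; rewrite !mxE.
  case: ltnP => h2.
    rewrite expr1 ltr0_norm ?mulN1r ?opprB // ?subr_lt0 ?ltr_nat //.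
  by rewrite expr0 mul1r ger0_norm // subr_ge0 ler_nat.
rewrite Y X in hV.
apply: (mulIf _ hV).
rewrite -X; apply/prodf_neq0 => p h; rewrite !mxE subr_eq0 eqr_nat.
by rewrite eq_sym neq_ltn h.
Qed.
End Inv.
Section Det.
Variable m : nat.
Local Notation n := m.+1.

Definition Mw : 'M[{poly rat}]_n := \matrix_(i, j) if (i <= j)%N then 'X else 1.
Definition Ew : 'M[{poly rat}]_n :=
  \matrix_(i, j) if i == j then 1 else if (j == i.+1 :> nat) then -1 else 0.

Lemma detEw : \det Ew = 1.
Proof.
rewrite -det_tr det_trig.
  by apply: big1 => i _; rewrite !mxE eqxx.
apply/is_trig_mxP => i j ij; rewrite !mxE.
have -> : (j == i) = false by apply/negP => /eqP e; move: ij; rewrite e ltnn.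
have -> : (i == j.+1 :> nat) = false.
  by apply/negP => /eqP e; move: ij; rewrite e ltnNge leqnSn.
done.
Qed.

Lemma EMw_entry (i j : 'I_n) :
  (Ew *m Mw) i j = if (i.+1 < n)%N then (if i == j then 'X - 1 else 0)
                   else (if (i <= j)%N then 'X else 1).
Proof.
rewrite !mxE (bigD1 i) //= !mxE eqxx mul1r.
case: ltnP => h.
  pose i1 : 'I_n := Ordinal h.
  rewrite (bigD1 i1) /=; last by apply/negP => /eqP /(congr1 val) /= /esym /n_Sn.
  rewrite !mxE.
  have -> : (i == i1) = false by apply/negP => /eqP /(congr1 val) /= /n_Sn.
  rewrite eqxx mulN1r.
  rewrite big1; last first.
    move=> l /andP [l1 l2]; rewrite !mxE [i == l]eq_sym (negbTE l1).
    have -> : (l == i.+1 :> nat) = false.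
      by apply/negP => /eqP e; move: l2; rewrite -val_eqE /= e eqxx.
    by rewrite mul0r.
  rewrite addr0 ?mxE /=.
  case: (ltngtP i j) => ij.
  - have -> : (i == j) = false by apply/negP => /eqP e; move: ij; rewrite e ltnn.
    by rewrite subrr.
  - have -> : (i == j) = false by apply/negP => /eqP e; move: ij; rewrite e ltnn.
    by rewrite subrr.
  - by rewrite (val_inj ij) eqxx.
rewrite big1 ?addr0 //.
move=> l li; rewrite !mxE [i == l]eq_sym (negbTE li).
have -> : (l == i.+1 :> nat) = false.
  by apply/negP => /eqP e; have := ltn_ord l; rewrite e ltnNge h.
by rewrite mul0r.
Qed.

Lemma detMw : \det Mw = 'X * ('X - 1) ^+ m.
Proof.
have := det_mulmx Ew Mw; rewrite detEw mul1r => <-.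
rewrite det_trig; last first.
  apply/is_trig_mxP => i j ij; rewrite EMw_entry.
  have -> : (i == j) = false by apply/negP => /eqP e; move: ij; rewrite e ltnn.
  case: ifP => // h; exfalso; have := ltn_ord j; move: h ij; lia.
rewrite big_ord_recr /= EMw_entry /= ltnn leqnn mulrC; congr (_ * _).
rewrite (eq_bigr (fun _ => 'X - 1)); last first.
  by move=> i _; rewrite EMw_entry /= ltnS ltn_ord eqxx.
by rewrite prodr_const card_ord.
Qed.

Lemma wex_sum k : (1 <= k <= n)%N ->
  \sum_(s : 'S_n | wex s == k) (-1 : rat) ^+ s = (-1) ^+ (n - k) * ('C(m, k.-1))%:R.
Proof.
case/andP => k1 kn.
have H := detMw.
rewrite /determinant in H.
have P : forall s : 'S_n, \prod_i Mw i (s i) = 'X ^+ wex s.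
  move=> s; rewrite (eq_bigr (fun i : 'I_n => if (i <= s i)%N then 'X else 1)); last by move=> i _; rewrite mxE.
  rewrite -big_mkcond /= prodr_const /wex cardsE //.
have := congr1 (fun p : {poly rat} => p`_k) H.
rewrite coef_sum coefXM (gtn_eqF k1).
rewrite (eq_bigr (fun s : 'S_n => (-1) ^+ s * (wex s == k)%:R)); last first.
  move=> s _; rewrite P; case: (odd_perm s); rewrite ?expr1 ?expr0 ?mulN1r ?mul1r ?coefN coefXn // eq_sym //.
have -> : \sum_(s : 'S_n | wex s == k) (-1 : rat) ^+ s = \sum_(s : 'S_n) (-1) ^+ s * (wex s == k)%:R.
  rewrite big_mkcond /=; apply: eq_bigr => s _; by case: eqP; rewrite ?mulr1 ?mulr0.
move=> ->.
case: k k1 kn => // k' _ kn; rewrite /= subSS.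
have km : (k' <= m)%N by [].
rewrite exprBn coef_sum.
have i0P : (m - k' < m.+1)%N by rewrite ltnS leq_subr.
rewrite (bigD1 (Ordinal i0P)) //= big1 ?addr0.
  rewrite coefMn expr1n mulr1 -!(signr_odd _ (m - k')%N) bin_sub // mulr_natr.
  by case: (odd (m - k')); rewrite ?expr1 ?expr0 ?mulN1r ?mul1r ?coefN coefXn subKn // eqxx.
move=> i hi.
have E : (k' == m - i)%N = false.
  apply/negP => /eqP e; move: hi; rewrite -val_eqE /= e subKn ?eqxx //.
  by rewrite -ltnS.
rewrite coefMn expr1n mulr1 -signr_odd.
by case: (odd i); rewrite ?expr1 ?expr0 ?mulN1r ?mul1r ?coefN coefXn E /= ?oppr0 mul0rn.
Qed.
End Det.

Lemma pairO n (pi : 'S_n) (i j : 'I_n) : (i < j)%N ->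
  (aligned pi i j || aligned pi j i) = (pi j < pi i)%N (+) (i <= pi i)%N (+) (j <= pi j)%N.
Proof.
move=> ij; rewrite !alignedE; apply: pairN => //.
apply/negP => /eqP /val_inj /perm_inj e; move: ij; rewrite e ltnn //.
Qed.

Lemma ord_neq n (x y : 'I_n) : (x != y) = (x != y :> nat).
Proof. by []. Qed.

Lemma wsum n (w : 'I_n -> rat) :
  \prod_(p : 'I_n * 'I_n | (p.1 < p.2)%N) w p.1 * \prod_(p : 'I_n * 'I_n | (p.1 < p.2)%N) w p.2
  = (\prod_i w i) ^+ n.-1.
Proof.
rewrite [X in _ * X](reindex_inj (h := fun p : 'I_n * 'I_n => (p.2, p.1))) /=; last first.
  by move=> [a b] [c d] /= [-> ->].
have -> : \prod_(p : 'I_n * 'I_n | (p.1 < p.2)%N) w p.1 * \prod_(p : 'I_n * 'I_n | (p.2 < p.1)%N) w p.1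
   = \prod_(p : 'I_n * 'I_n | p.1 != p.2) w p.1.
  rewrite [RHS](bigID (fun p : 'I_n * 'I_n => (p.1 < p.2)%N)) /=.
  congr (_ * _); apply: eq_bigl => -[a b] /=; rewrite ord_neq; case: ltngtP => //.
rewrite -(pair_big_dep xpredT (fun i j : 'I_n => i != j) (fun i (_ : 'I_n) => w i)) /= -prodrXl.
apply: eq_bigr => i _.
rewrite (eq_bigl (fun j => j \in [pred j : 'I_n | i != j])) // prodr_const.
congr (_ ^+ _); have := cardC1 i; rewrite card_ord => <-; apply: eq_card => j; by rewrite !inE eq_sym.
Qed.

Lemma wex_prod n (pi : 'S_n) : \prod_(i : 'I_n) (-1 : rat) ^+ (i <= pi i)%N = (-1) ^+ wex pi.
Proof.
rewrite (eq_bigr (fun i : 'I_n => if (i <= pi i)%N then -1 else 1)); last by move=> i _; case: ifP.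
by rewrite -big_mkcond /= prodr_const /wex cardsE.
Qed.

Lemma al_sign n (pi : 'S_n) : (-1 : rat) ^+ al pi = (-1) ^+ pi * ((-1) ^+ wex pi) ^+ n.-1.
Proof.
rewrite /al -prodr_const.
rewrite (eq_bigl (fun p : 'I_n * 'I_n => (p.1 < p.2)%N && (aligned pi p.1 p.2 || aligned pi p.2 p.1))); last first.
  by move=> p; rewrite inE.
rewrite big_mkcondr /=.
rewrite (eq_bigr (fun p : 'I_n * 'I_n => (-1) ^+ (pi p.2 < pi p.1)%N * (-1) ^+ (p.1 <= pi p.1)%N * (-1) ^+ (p.2 <= pi p.2)%N)); last first.
  by move=> p h; rewrite pairO // -!signr_addb; case: (_ (+) _).
rewrite !big_split /= inv_sign -mulrA (wsum (fun i : 'I_n => (-1 : rat) ^+ (i <= pi i)%N)) wex_prod //.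
Qed.

Lemma sgnz (a b : nat) : (-1 : rat) ^ (a%:Z - b%:Z) = (-1) ^+ a * (-1) ^+ b.
Proof.
by rewrite exprzDr ?unitrN1 // -exprnN invr_sign.
Qed.

Unset Implicit Arguments. Set Strict Implicit.

Theorem mainTheorem12 (n k : nat) :
  (1 <= k <= n)%N ->
  Ehat_eval n (-1 : rat) k = ('C(n.-1, k.-1))%:R \/
  Ehat_eval n (-1 : rat) k = - ('C(n.-1, k.-1))%:R.
Proof.
move=> hk; left.
case: n hk => [|m] hk; first by case/andP: hk => h1 h2; move: (leq_trans h1 h2).
rewrite /Ehat_eval /E_eval sgnz.
rewrite (eq_bigr (fun pi : 'S_m.+1 => (-1) ^+ (k * (m.+1 - k)) * ((-1) ^+ pi * ((-1) ^+ k) ^+ m))); last first.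
  by move=> pi /eqP wk; rewrite sgnz al_sign wk.
rewrite -big_distrr /= -big_distrl /= wex_sum //.
rewrite !mulrA -!exprM -!exprD.
case/andP: hk; case: k => // k' _ kn.
have [d ->] : exists d, m = (k' + d)%N by exists (m - k')%N; rewrite subnKC // -ltnS.
rewrite subSS addKn mulrAC -exprD -signr_odd.
rewrite !oddD !oddM /= !oddD.
by case: (odd k'); case: (odd d); rewrite /= ?expr0 ?mul1r.
Qed.
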